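(* Let $X$ be an extremally disconnected topological space satisfying $S_1(s\mathcal{O},s\mathcal{O})$. Let $\mathcal{V}_1,\mathcal{V}_2,\dots$ be nonempty finite families of semi-open subsets of $X$ such that for each $x\in X$ we have $x\in\bigcup\mathcal{V}_n$ for infinitely many $n$. Then there are $U_1\in\mathcal{V}_1, U_2\in\mathcal{V}_2,\dots$ such that $\{U_1,U_2,\dots\}$ covers $X$.
   Context: A subset $A$ of a topological space $X$ is semi-open if $A\subseteq \mathrm{Cl}(\mathrm{Int}(A))$; a semi-open cover is a cover by semi-open sets. A space is extremally disconnected if the closure of every open set is open. $X$ satisfies $S_1(s\mathcal{O},s\mathcal{O})$ (is semi-Rothberger) if for each sequence $\langle\mathcal{U}_n:n\in\omega\rangle$ of semi-open covers of $X$ there are $U_n\in\mathcal{U}_n$ ($n\in\omega$) with $\{U_n:n\in\omega\}$ a cover of $X$. *)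

(* Defs.v *)
From HB Require Import structures.
From mathcomp Require Import all_boot all_order.
From mathcomp Require Import all_classical all_reals topology.
Set Implicit Arguments. Unset Strict Implicit. Unset Printing Implicit Defensive.
Local Open Scope classical_set_scope.

Definition semi_open {X : topologicalType} (A : set X) : Prop :=
  A `<=` closure (interior A).

Definition semi_open_cover {X : topologicalType} (U : set (set X)) : Prop :=
  (forall A, U A -> semi_open A) /\ (forall x : X, exists2 A, U A & A x).

Definition extremally_disconnected (X : topologicalType) : Prop :=
  forall U : set X, open U -> open (closure U).

Definition semi_Rothberger (X : topologicalType) : Prop :=
  forall Us : nat -> set (set X), (forall n, semi_open_cover (Us n)) ->
  exists U : nat -> set X, (forall n, Us n (U n)) /\
    (forall x : X, exists n, U n x).

(* Main.v *)
Require Import Defs.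
From HB Require Import structures.
From mathcomp Require Import all_boot all_order.
From mathcomp Require Import all_classical all_reals topology.
Local Open Scope classical_set_scope.

Definition bigI {X : Type} (s : seq nat) (f : nat -> set X) : set X :=
  [set y | forall n, n \in s -> f n y].

Lemma pick_seq {N : set nat} : infinite_set N -> forall m,
  exists s : seq nat, [/\ uniq s, size s = m & forall n, n \in s -> N n].
Proof.
move=> iN; elim=> [|m [s [us ss sN]]]; first by exists [::].
have [n [Nn ns]] : exists n, N n /\ n \notin s.
  apply: contrapT => hc; apply: iN; apply: (sub_finite_set _ (finite_seq s)).
  move=> n Nn /=; apply: contrapT => ns; apply: hc; exists n; split=> //.
  by apply/negP.
exists (n :: s); split => //=; first by rewrite ns.
  by rewrite ss.
by move=> k; rewrite in_cons => /orP [/eqP ->|/sN].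
Qed.

Section Hist.
Variable S : nat -> seq nat.
Fixpoint hist (m : nat) : seq nat :=
  if m is m'.+1 then rcons (hist m') (head 0 [seq n <- S m' | n \notin hist m'])
  else [::].
Definition sig m := head 0 [seq n <- S m | n \notin hist m].

Lemma hist_size m : size (hist m) = m.
Proof. by elim: m => //= m IH; rewrite size_rcons IH. Qed.

Lemma hist_mem i m : i < m -> sig i \in hist m.
Proof.
elim: m => // m IH; rewrite ltnS leq_eqVlt => /orP [/eqP ->|/IH him] /=;
  rewrite mem_rcons in_cons.
  by rewrite eqxx.
by rewrite him orbT.
Qed.

Hypothesis HS : forall m, uniq (S m) /\ size (S m) = m.+1.

Lemma sig_spec m : sig m \in S m /\ sig m \notin hist m.
Proof.
rewrite /sig; case E: [seq n <- S m | n \notin hist m] => [|a l] /=.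
  exfalso; have [u sz] := HS m.
  have : {subset S m <= hist m}.
    move=> n nS; apply: contraT => nh.
    have : n \in [seq n <- S m | n \notin hist m] by rewrite mem_filter nh.
    by rewrite E.
  move=> /(uniq_leq_size u); rewrite sz hist_size ltnn //.
have : a \in [seq n <- S m | n \notin hist m] by rewrite E mem_head.
by rewrite mem_filter => /andP [].
Qed.

Lemma sig_inj i j : sig i = sig j -> i = j.
Proof.
case: (ltngtP i j) => // h e.
  by have := (sig_spec j).2; rewrite -e hist_mem.
by have := (sig_spec i).2; rewrite e hist_mem.
Qed.
End Hist.

Lemma semiI (X : topologicalType) (A B : set X) :
  extremally_disconnected X -> semi_open A -> semi_open B -> semi_open (A `&` B).
Proof.
move=> ED hA hB x [Ax Bx] N; rewrite nbhsE => -[N' [oN' N'x] sN].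
have oC := ED _ (@open_interior _ A).
have [y [Biy [N'y Cy]]] := hB x Bx (N' `&` closure (interior A))
  (open_nbhs_nbhs (conj (openI oN' oC) (conj N'x (hA x Ax)))).
have [z [Aiz [N'z Biz]]] := Cy (N' `&` interior B)
  (open_nbhs_nbhs (conj (openI oN' (@open_interior _ B)) (conj N'y Biy))).
by exists z; split; [rewrite interiorI|apply: sN].
Qed.

Lemma semiT (X : topologicalType) : semi_open (@setT X).
Proof.
move=> x _; apply: subset_closure.
by apply: (proj1 (iffLR (@openE X _) openT _ I)) || (rewrite /interior; apply: filterT).
Qed.

Lemma semi_bigI (X : topologicalType) (s : seq nat) (f : nat -> set X) :
  extremally_disconnected X -> (forall n, n \in s -> semi_open (f n)) ->
  semi_open (bigI s f).
Proof.
move=> ED; elim: s => [|a s IH] hs.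
  have -> : bigI [::] f = setT by apply/seteqP; split => // y _ n; rewrite in_nil.
  exact: semiT.
have -> : bigI (a :: s) f = f a `&` bigI s f.
  apply/seteqP; split => y.
    by move=> h; split; [apply: h; rewrite mem_head|move=> n ns; apply: h; rewrite in_cons ns orbT].
  by move=> [fa hb] n; rewrite in_cons => /orP [/eqP ->|/hb].
apply: semiI => //; first by apply: hs; rewrite mem_head.
by apply: IH => n ns; apply: hs; rewrite in_cons ns orbT.
Qed.

Lemma choiceE X Y (P : X -> Y -> Prop) :
  (forall x, exists y, P x y) -> exists f, forall x, P x (f x).
Proof. by move=> /choice [f hf]; exists f. Qed.

Theorem lemma6 (X : topologicalType) (V : nat -> set (set X)) :
  extremally_disconnected X -> semi_Rothberger X ->
  (forall n, finite_set (V n) /\ V n !=set0 /\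
             (forall A, V n A -> semi_open A)) ->
  (forall x : X, infinite_set [set n | exists2 A, V n A & A x]) ->
  exists U : nat -> set X, (forall n, V n (U n)) /\
    (forall x : X, exists n, U n x).
Proof.
move=> ED SR HV Hinf.
pose Us m := [set P : set X | exists s f, [/\ uniq s, size s = m.+1,
   (forall n, n \in s -> V n (f n)) & P = bigI s f]].
have cov : forall m, semi_open_cover (Us m).
  move=> m; split.
    move=> P [s [f [_ _ hf ->]]]; apply: semi_bigI => // n ns.
    by apply: (HV n).2.2; apply: hf.
  move=> x; have [s [us ss sN]] := pick_seq (Hinf x) m.+1.
  have [f hf] : exists f : nat -> set X, forall n,
      V n (f n) /\ ((exists2 A, V n A & A x) -> f n x).
    apply: (@choiceE nat (set X) (fun n B => V n B /\ ((exists2 A, V n A & A x) -> B x))) => n; case: (pselect (exists2 A, V n A & A x)) => [[A VA Ax]|nx].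
      by exists A.
    by have [A VA] := (HV n).2.1; exists A; split => // h.
  exists (bigI s f).
    by exists s, f; split => // n _; apply: (hf n).1.
  by move=> n ns; apply: (hf n).2; apply: sN.
have [P [HP Pcov]] := SR Us cov.
have [SF HSF] : exists SF : nat -> (seq nat * (nat -> set X)), forall m,
   [/\ uniq (SF m).1, size (SF m).1 = m.+1,
   (forall n, n \in (SF m).1 -> V n ((SF m).2 n)) & P m = bigI (SF m).1 (SF m).2].
  apply: (@choiceE nat (seq nat * (nat -> set X)) (fun m (p : seq nat * (nat -> set X)) =>
   [/\ uniq p.1, size p.1 = m.+1,
   (forall n, n \in p.1 -> V n (p.2 n)) & P m = bigI p.1 p.2])).
  by move=> m; have [s [f h]] := HP m; exists (s, f).
pose S m := (SF m).1.
have HS : forall m, uniq (S m) /\ size (S m) = m.+1.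
  by move=> m; have [] := HSF m.
have [U HU] : exists U : nat -> set X, forall n, V n (U n) /\
    (forall m, sig S m = n -> U n = (SF m).2 n).
  apply: (@choiceE nat (set X) (fun n A => V n A /\
    (forall m, sig S m = n -> A = (SF m).2 n))).
  move=> n; case: (pselect (exists m, sig S m = n)) => [[m hm]|nm].
    exists ((SF m).2 n); split.
      have [_ _ h _] := HSF m; apply: h; rewrite -hm.
      exact: (@sig_spec S HS m).1.
    by move=> m' hm'; have -> // : m' = m by apply: (@sig_inj S HS); rewrite hm hm'.
  have [A VA] := (HV n).2.1; exists A; split => // m hm.
  by exfalso; apply: nm; exists m.
exists U; split; first by move=> n; apply: (HU n).1.
move=> x; have [m Pmx] := Pcov x.
exists (sig S m); rewrite ((HU _).2 m erefl).
have [_ _ _ hP] := HSF m; move: Pmx; rewrite hP; apply.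
exact: (@sig_spec S HS m).1.
Qed.
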